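(* Let $Q$ be a quiver and $\theta\in\mathbb{Z}^{Q_0}$ with $\nabla(Q,\theta)\ne\emptyset$. Suppose that some vertex $v$ has exactly two arrows $a,b$ attached to it, where $a$ connects $v$ with a vertex $u$ and $b$ connects $v$ with a vertex $w$ ($u,v,w$ distinct), and either both $a,b$ point towards $v$ or both point away from $v$. Let $Q'$ be obtained from $Q$ by replacing $a,b$ by the reversed arrows $\hat a,\hat b$, and let $\theta'\in\mathbb{Z}^{Q'_0}=\mathbb{Z}^{Q_0}$ be given by $\theta'(v)=-\theta(v)$, $\theta'(u)=\theta(u)+\theta(v)$, $\theta'(w)=\theta(w)+\theta(v)$, and $\theta'(z)=\theta(z)$ for all other vertices $z$. Then $\nabla(Q,\theta)$ and $\nabla(Q',\theta')$ are integral-affinely equivalent.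
   Context: A quiver $Q$: vertices $Q_0$, arrows $Q_1$, $a$ from $a^-$ to $a^+$. $\nabla(Q,\theta)=\{x\in\mathbb{R}_{\ge0}^{Q_1}\mid\forall v:\ \theta(v)=\sum_{a^+=v}x(a)-\sum_{a^-=v}x(a)\}$. Lattice polyhedra $\nabla_i\subset V_i$ with lattices $M_i$ (here $\mathbb{Z}^{Q_1}$, $\mathbb{Z}^{Q'_1}$) are integral-affinely equivalent if an affine isomorphism $\mathrm{AffSpan}(\nabla_1)\to\mathrm{AffSpan}(\nabla_2)$ maps $\mathrm{AffSpan}(\nabla_1)\cap M_1$ onto $\mathrm{AffSpan}(\nabla_2)\cap M_2$ and $\nabla_1$ onto $\nabla_2$. *)

(* Defs.v *)
From HB Require Import structures.
From mathcomp Require Import all_boot all_order all_algebra.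
From mathcomp Require Import reals.
Set Implicit Arguments. Unset Strict Implicit. Unset Printing Implicit Defensive.
Import Order.TTheory GRing.Theory Num.Theory.
Local Open Scope ring_scope.

(* A finite quiver is given by a finite vertex type V, a finite arrow type A,
   and source/target maps  src a = a^-  and  tgt a = a^+. *)

Definition nabla (R : realType) (V A : finType) (src tgt : A -> V)
    (theta : V -> int) (x : A -> R) : Prop :=
  (forall a, 0 <= x a) /\
  (forall v, (theta v)%:~R = \sum_(a | tgt a == v) x a - \sum_(a | src a == v) x a).

Definition aff_span (R : realType) (A : finType) (P : (A -> R) -> Prop)
    (y : A -> R) : Prop :=
  exists (n : nat) (p : 'I_n -> A -> R) (c : 'I_n -> R),
    (forall i, P (p i)) /\ \sum_(i < n) c i = 1 /\
    (forall a, y a = \sum_(i < n) c i * p i a).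

Definition lattice_pt (R : realType) (A : finType) (x : A -> R) : Prop :=
  forall a, x a \is a Num.int.

Definition int_aff_equiv (R : realType) (A1 A2 : finType)
    (P1 : (A1 -> R) -> Prop) (P2 : (A2 -> R) -> Prop) : Prop :=
  exists (f : (A1 -> R) -> (A2 -> R)) (g : (A2 -> R) -> (A1 -> R)),
    (forall x, aff_span P1 x -> aff_span P2 (f x)) /\
        (forall y, aff_span P2 y -> aff_span P1 (g y)) /\
        (forall x, aff_span P1 x -> g (f x) = x) /\
        (forall y, aff_span P2 y -> f (g y) = y) /\
        (forall x y (l : R), aff_span P1 x -> aff_span P1 y ->
           f (fun a => (1 - l) * x a + l * y a) =
           (fun a => (1 - l) * f x a + l * f y a)) /\
        (forall x, aff_span P1 x -> (lattice_pt x <-> lattice_pt (f x))) /\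
      (forall x, aff_span P1 x -> (P1 x <-> P2 (f x))).

Definition rev2 (V A : finType) (src tgt : A -> V) (a b : A) : A -> V :=
  fun c => if (c == a) || (c == b) then tgt c else src c.

Definition theta' (V : finType) (theta : V -> int) (u v w : V) : V -> int :=
  fun z => if z == v then - theta v
           else if (z == u) || (z == w) then theta z + theta v
           else theta z.

(* Main.v *)
Require Import Defs.
From HB Require Import structures.
From mathcomp Require Import all_boot all_order all_algebra.
From mathcomp Require Import reals.
From mathcomp Require Import ring lra.
From Stdlib Require Import FunctionalExtensionality.
Import Order.TTheory GRing.Theory Num.Theory.
Local Open Scope ring_scope.

Section S.
Variables (R : realType) (V A : finType) (src tgt : A -> V) (u v w : V) (a b : A).
Hypotheses (uv : u != v) (vw : v != w) (uw : u != w).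
Hypothesis Hv : forall c : A, (src c == v) || (tgt c == v) = (c == a) || (c == b).
Hypothesis Hor : (src a = u /\ tgt a = v /\ src b = w /\ tgt b = v) \/
   (src a = v /\ tgt a = u /\ src b = v /\ tgt b = w).

Definition coef (s t : A -> V) (c : A) (z : V) : R :=
  (z == t c)%:R - (z == s c)%:R.

Lemma balE (s t : A -> V) (x : A -> R) z :
  \sum_(c | t c == z) x c - \sum_(c | s c == z) x c = \sum_c x c * coef s t c z.
Proof.
rewrite (big_mkcond (fun c => t c == z)) (big_mkcond (fun c => s c == z)) -sumrN -big_split; apply eq_bigr => c _ /=; rewrite /coef.
rewrite ![z == _]eq_sym; case: (t c == z); case: (s c == z) => /=; ring.
Qed.

Definition T (k : V -> R) (z : V) : R :=
  if z == v then - k v else if (z == u) || (z == w) then k z + k v else k z.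

Definition sw (c : A) : A := if c == a then b else if c == b then a else c.

Lemma ab : a != b.
Proof.
apply/eqP => eab; subst b; case: Hor => [[-> [_ [E _]]]|[_ [-> [_ E]]]];
  by move: uw; rewrite E eqxx.
Qed.

Lemma swK : involutive sw.
Proof.
move=> c; rewrite /sw; have nab := ab.
case: (eqVneq c a) => [->|ca]; first by rewrite eq_sym (negbTE nab) eqxx.
case: (eqVneq c b) => [->|cb]; first by rewrite eqxx.
by rewrite (negbTE ca) (negbTE cb).
Qed.

Lemma e1 : (u == v) = false. Proof. by apply/negbTE. Qed.
Lemma e2 : (v == u) = false. Proof. by rewrite eq_sym; apply/negbTE. Qed.
Lemma e3 : (v == w) = false. Proof. by apply/negbTE. Qed.
Lemma e4 : (w == v) = false. Proof. by rewrite eq_sym; apply/negbTE. Qed.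
Lemma e5 : (u == w) = false. Proof. by apply/negbTE. Qed.
Lemma e6 : (w == u) = false. Proof. by rewrite eq_sym; apply/negbTE. Qed.

Ltac fin z := idtac;
  let zv := fresh in let zu := fresh in let zw := fresh in
  (have [zv|zv] := eqVneq z v; [rewrite ?zv; rewrite ?eqxx ?e1 ?e2 ?e3 ?e4 ?e5 ?e6 /=; try ring|]);
  (have [zu|zu] := eqVneq z u; [rewrite ?zu; rewrite ?eqxx ?e1 ?e2 ?e3 ?e4 ?e5 ?e6 /=; try ring|]);
  (have [zw|zw] := eqVneq z w; [rewrite ?zw; rewrite ?eqxx ?e1 ?e2 ?e3 ?e4 ?e5 ?e6 /=; try ring|]);
  rewrite ?(negbTE zv) ?(negbTE zu) ?(negbTE zw) ?(eq_sym v) ?(eq_sym u) ?(eq_sym w) ?(negbTE zv) ?(negbTE zu) ?(negbTE zw) /=; try ring.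

Lemma coefE c z :
  coef (rev2 src tgt a b) (rev2 tgt src a b) (sw c) z = T (coef src tgt c) z.
Proof.
have nab := ab.
have e7 : (b == a) = false by rewrite eq_sym; apply/negbTE.
have e8 : (a == b) = false by apply/negbTE.
rewrite /coef /T /rev2 /sw.
case: (eqVneq c a) => [->|ca].
  rewrite eqxx e7 orbT.
  case: Hor => [[-> [-> [-> ->]]]|[-> [-> [-> ->]]]].
  1,2: fin z.
case: (eqVneq c b) => [->|cb].
  rewrite eqxx e8 /=.
  case: Hor => [[-> [-> [-> ->]]]|[-> [-> [-> ->]]]].
  1,2: fin z.
rewrite (negbTE ca) (negbTE cb) /=.
have := Hv c; rewrite (negbTE ca) (negbTE cb) /= => /norP [sv tv].
rewrite ![v == _]eq_sym (negbTE sv) (negbTE tv) /= subr0.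
have [zv|zv] := eqVneq z v.
  by rewrite zv ![v == _]eq_sym (negbTE sv) (negbTE tv) /= subr0 oppr0.
by case: ifP => _ //; rewrite addr0.
Qed.

Lemma Tsum (x : A -> R) (k : A -> V -> R) z :
  \sum_c x c * T (k c) z = T (fun z => \sum_c x c * k c z) z.
Proof.
rewrite /T; case: ifP => _.
  by rewrite -sumrN; apply: eq_bigr => c _; rewrite mulrN.
case: ifP => _ //.
by rewrite -big_split; apply: eq_bigr => c _; rewrite mulrDr.
Qed.

Lemma Tinj (k1 k2 : V -> R) :
  (forall z, T k1 z = T k2 z) <-> (forall z, k1 z = k2 z).
Proof.
split; last by move=> H z; rewrite /T !H.
move=> H.
have Hvv : k1 v = k2 v by have := H v; rewrite /T eqxx => /oppr_inj.
move=> z; have := H z; rewrite /T.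
case: (eqVneq z v) => [->//|_].
by case: ifP => _ // /eqP; rewrite Hvv (inj_eq (addIr _)) => /eqP.
Qed.

Lemma thetaE (theta : V -> int) z :
  ((theta' theta u v w z)%:~R : R) = T (fun z => (theta z)%:~R) z.
Proof.
rewrite /theta' /T; case: ifP => _; first by rewrite rmorphN.
by case: ifP => _ //; rewrite rmorphD.
Qed.

Definition fsw (x : A -> R) : A -> R := fun c => x (sw c).

Lemma key (theta : V -> int) (x : A -> R) :
  nabla src tgt theta x <->
  nabla (rev2 src tgt a b) (rev2 tgt src a b) (theta' theta u v w) (fsw x).
Proof.
have E : forall z, \sum_(c | rev2 tgt src a b c == z) fsw x c
   - \sum_(c | rev2 src tgt a b c == z) fsw x c
   = T (fun z => \sum_(c | tgt c == z) x c - \sum_(c | src c == z) x c) z.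
  move=> z; rewrite balE (reindex_inj (inv_inj swK)) /=.
  under eq_bigr => c _ do rewrite /fsw swK coefE.
  rewrite Tsum; congr T; apply: functional_extensionality => y; by rewrite balE.
split.
  case=> H0 H1; split; first by move=> c; exact: H0.
  move=> z; rewrite thetaE E; move: z; apply/Tinj; exact: H1.
case=> H0 H1; split; first by move=> c; rewrite -(swK c); exact: H0.
apply/Tinj => z; rewrite -thetaE -E; exact: H1.
Qed.
End S.

Theorem proposition4p8 (R : realType) (V A : finType) (src tgt : A -> V)
    (theta : V -> int) (u v w : V) (a b : A) :
  (exists x : A -> R, nabla src tgt theta x) ->
  u != v -> v != w -> u != w ->
  (* a and b are exactly the arrows attached to v *)
  (forall c : A, (src c == v) || (tgt c == v) = (c == a) || (c == b)) ->
  (* both point towards v, or both point away from v *)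
  ((src a = u /\ tgt a = v /\ src b = w /\ tgt b = v) \/
   (src a = v /\ tgt a = u /\ src b = v /\ tgt b = w)) ->
  int_aff_equiv (nabla (R := R) src tgt theta)
    (nabla (R := R) (rev2 src tgt a b) (rev2 tgt src a b) (theta' theta u v w)).
Proof.
move=> _ uv vw uw Hv Hor.
have K := @key R V A src tgt u v w a b uv vw uw Hv Hor theta.
have sK := @swK V A src tgt u v w a b uw Hv Hor.
set f := fsw R A a b.
have ffK : forall x, f (f x) = x.
  by move=> x; apply: functional_extensionality => c; rewrite /f /fsw sK.
have K' : forall y, nabla (rev2 src tgt a b) (rev2 tgt src a b) (theta' theta u v w) y
    <-> nabla src tgt theta (f y).
  by move=> y; have := K (f y); rewrite -/f ffK => ->.
have AF : forall (P Q : (A -> R) -> Prop), (forall x, P x -> Q (f x)) ->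
    forall x, aff_span P x -> aff_span Q (f x).
  move=> P Q PQ x [n [p [c [Hp [Hc Hy]]]]].
  exists n, (fun i => f (p i)), c; split; first by move=> i; apply: PQ.
  by split => // a'; rewrite /f /fsw Hy.
exists f, f; split; first by apply: AF => x /K; rewrite -/f.
split; first by apply: AF => y /K'.
split; first by move=> x _; exact: ffK.
split; first by move=> y _; exact: ffK.
split; first by [].
split; last by move=> x _; exact: K.
move=> x _; split => H c; first exact: H.
by rewrite -(sK c); exact: H.
Qed.
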